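(* Let $N\ge 2$ be an integer and consider the one-mode projection graph $G_N$ on the primes $\le N$ defined below. Let $p_k$ denote the $k$-th prime ($p_1=2,p_2=3,\dots$) and set $p_0=1$. For a nonnegative integer $k$, let $P(k)$ be the fraction of primes $p\le N$ whose degree in $G_N$ equals $k$. Then $$P(k)=\frac{\pi\left(\frac{N}{p_k}\right)-\pi\left(\frac{N}{p_{k+1}}\right)}{\pi(N)},$$ where $\pi(x)$ is the number of primes $\le x$.
   Context: The graph $G_N$ has vertex set the primes $p\le N$. Two distinct primes $p,p'\le N$ are adjacent iff some composite integer $c\le N$ is divisible by both $p$ and $p'$. A prime $p$ carries a self-loop iff $p^2\le N$. The degree of $p$ is the number of distinct primes $p'\ne p$ adjacent to $p$, plus $1$ if $p$ carries a self-loop. *)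

(* Defs.v *)
From mathcomp Require Import all_boot all_order all_algebra.
Set Implicit Arguments. Unset Strict Implicit. Unset Printing Implicit Defensive.

Definition prime_pi (n : nat) : nat := count prime (iota 0 n.+1).

Lemma next_prime_ex (m : nat) : exists p, (m < p) && prime p.
Proof. by case: (prime_above m) => p Hm Hp; exists p; rewrite Hm Hp. Qed.
Definition next_prime (m : nat) : nat := ex_minn (next_prime_ex m).

Definition nth_prime (k : nat) : nat := iter k next_prime 1.

Definition composite (c : nat) : bool := (1 < c) && ~~ prime c.

Definition adjG (N p q : nat) : bool :=
  (p != q) && [exists c : 'I_N.+1, composite c && (p %| c) && (q %| c)].

Definition loopG (N p : nat) : bool := p ^ 2 <= N.

Definition degG (N p : nat) : nat :=
  #|[set q : 'I_N.+1 | prime q && adjG N p q]| + loopG N p.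

Definition Pdeg (N k : nat) : rat :=
  (#|[set p : 'I_N.+1 | prime p && (degG N p == k)]|%:R / (prime_pi N)%:R)%R.

(* Main.v *)
Require Import Defs.
From mathcomp Require Import all_boot all_order all_algebra zify.

Lemma count_split (T : Type) (f g h : pred T) (s : seq T) :
  (forall x, (f x : nat) = g x + h x) -> count f s = count g s + count h s.
Proof.
move=> H; elim: s => [|x s IH] //=; rewrite IH H; lia.
Qed.

Lemma card_ord_count n (P : pred nat) :
  #|[set x : 'I_n | P (val x)]| = count P (iota 0 n).
Proof.
rewrite -val_enum_ord count_map cardE /enum_mem size_filter -enumT.
rewrite (@eq_filter _ _ predT) // filter_predT; apply: eq_count => x /=; by rewrite inE.
Qed.

Lemma pi_S m : prime_pi m.+1 = prime_pi m + prime m.+1.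
Proof.
by rewrite /prime_pi -addn1 iotaD count_cat /= addn0.
Qed.

Lemma pi_mono m n : m <= n -> prime_pi m <= prime_pi n.
Proof.
move=> /subnKC <-; elim: (n - m) => [|d IH]; first by rewrite addn0.
by rewrite addnS pi_S (leq_trans IH) ?leq_addr.
Qed.

Lemma next_prime_spec m :
  [/\ m < next_prime m, prime (next_prime m) &
      forall n, m < n -> prime n -> next_prime m <= n].
Proof.
rewrite /next_prime; case: ex_minnP => p /andP[H1 H2] H3; split => //.
by move=> n h1 h2; apply: H3; rewrite h1 h2.
Qed.

Lemma nth_primeS k : nth_prime k.+1 = next_prime (nth_prime k).
Proof. by rewrite /nth_prime iterS. Qed.

Lemma nth_prime_gt0 k : 0 < nth_prime k.
Proof.
case: k => [//|k]; rewrite nth_primeS; case: (next_prime_spec (nth_prime k)).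
by move=> _ /prime_gt0.
Qed.

Lemma nth_prime_lt k : nth_prime k < nth_prime k.+1.
Proof. by rewrite nth_primeS; case: (next_prime_spec (nth_prime k)). Qed.

Lemma pi_between k d : nth_prime k + d < nth_prime k.+1 ->
  prime_pi (nth_prime k + d) = prime_pi (nth_prime k).
Proof.
elim: d => [|d IH]; first by rewrite addn0.
move=> H; rewrite addnS pi_S IH; last by lia.
case Hp: (prime (nth_prime k + d).+1); last by rewrite addn0.
move: H; rewrite nth_primeS; case: (next_prime_spec (nth_prime k)) => _ _ H3.
have := H3 _ _ Hp; lia.
Qed.

Lemma pi_nth k : prime_pi (nth_prime k) = k.
Proof.
elim: k => [//|k IH].
have h1 := nth_prime_lt k.
have E : nth_prime k.+1 = (nth_prime k + ((nth_prime k.+1).-1 - nth_prime k)).+1 by lia.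
have Hp : prime (nth_prime k.+1).
  by rewrite nth_primeS; case: (next_prime_spec (nth_prime k)).
have Hb := @pi_between k ((nth_prime k.+1).-1 - nth_prime k) ltac:(lia).
rewrite E pi_S Hb -E Hp IH addn1 //.
Qed.

Lemma pi_lt k m : m < nth_prime k.+1 -> prime_pi m <= k.
Proof.
elim: k m => [|k IH] m H.
  case: (leqP (nth_prime 0) m) => h.
    by rewrite -(subnKC h) (@pi_between 0) ?pi_nth ?subnKC.
  by move: h; rewrite /nth_prime /= ltnS leqn0 => /eqP ->.
case: (leqP (nth_prime k.+1) m) => h.
  by rewrite -(subnKC h) (@pi_between k.+1) ?pi_nth ?subnKC.
by apply: leq_trans (IH _ h) _.
Qed.

Lemma pi_char k m : 0 < m ->
  (prime_pi m == k) = (nth_prime k <= m) && (m < nth_prime k.+1).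
Proof.
move=> m0; apply/eqP/andP.
  move=> Hk; split.
    case: (leqP (nth_prime k) m) => // h; exfalso.
    case: k Hk h => [|k] Hk h; first by move: h; rewrite /nth_prime /=; lia.
    have := pi_lt _ _ h; lia.
  case: (ltnP m (nth_prime k.+1)) => // h; exfalso.
  have := pi_mono _ _ h; rewrite pi_nth; lia.
case=> h1 h2; apply/eqP; rewrite eqn_leq pi_lt //=.
by have := pi_mono _ _ h1; rewrite pi_nth.
Qed.

Lemma notprime_mul p q : prime p -> prime q -> ~~ prime (p * q).
Proof.
move=> hp hq; apply/negP => H.
have := dvdn_prime2 hp H; rewrite dvdn_mulr // => /eqP E.
have := prime_gt1 hp; have := prime_gt1 hq; nia.
Qed.

Lemma adj_iff N p q : prime p -> prime q -> adjG N p q = (p != q) && (p * q <= N).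
Proof.
move=> hp hq; rewrite /adjG; case: eqP => //= /eqP pq.
apply/existsP/idP.
  case=> c /andP[/andP[/andP[c1 c2] h1] h2].
  have cop : coprime p q by rewrite prime_coprime // dvdn_prime2.
  have hd : p * q %| c by rewrite Gauss_dvd // h1 h2.
  have := dvdn_leq (ltnW c1) hd; have := ltn_ord c; lia.
move=> h; exists (Ordinal (h : p * q < N.+1)) => /=.
rewrite /composite notprime_mul // dvdn_mulr // dvdn_mull // andbT.
have := prime_gt1 hp; have := prime_gt1 hq; nia.
Qed.

Lemma pi_count a n : a < n ->
  count (fun q => prime q && (q <= a)) (iota 0 n) = prime_pi a.
Proof.
move=> han; rewrite /prime_pi -(subnKC han) iotaD count_cat.
have -> : count (fun q => prime q && (q <= a)) (iota (0 + a.+1) (n - a.+1)) = 0.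
  apply/eqP; rewrite eqn0Ngt -has_count; apply/hasPn => x.
  by rewrite mem_iota add0n => /andP[h _]; rewrite leqNgt h andbF.
rewrite addn0; apply: eq_in_count => x; rewrite mem_iota add0n => /andP[_ h].
by rewrite /= -ltnS h andbT.
Qed.

Lemma degG_pi N p : prime p -> p <= N -> degG N p = prime_pi (N %/ p).
Proof.
move=> hp hpN; rewrite /degG.
rewrite (card_ord_count N.+1 (fun q => prime q && adjG N p q)).
have ha : N %/ p < N.+1 by rewrite ltnS leq_div.
rewrite -(pi_count _ _ ha).
rewrite (@count_split _ (fun q => prime q && (q <= N %/ p))
   (fun q => prime q && adjG N p q) (fun q => prime q && (q <= N %/ p) && (q == p))).
  congr (_ + _).
  rewrite /loopG.
  have hl : (p ^ 2 <= N) = (p <= N %/ p) by rewrite leq_divRL ?prime_gt0.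
  rewrite hl; case hl': (p <= N %/ p).
    transitivity (count_mem p (iota 0 N.+1)).
      by rewrite (count_uniq_mem p (iota_uniq 0 N.+1)) mem_iota /= ltnS hpN.
    apply: eq_count => x /=; case: eqP => [->|]; by rewrite ?andbT ?andbF ?hp.
  apply/esym/eqP; rewrite eqn0Ngt -has_count; apply/hasPn => x _.
  by case: eqP => [->|]; rewrite ?andbT ?andbF // hl' andbF.
move=> x; case hx: (prime x) => //=.
rewrite adj_iff // leq_divRL ?prime_gt0 // mulnC.
by rewrite eq_sym; case: eqP => _; case: (p * x <= N).
Qed.

Theorem mainTheorem9 (N k : nat) (hN : 2 <= N) :
  Pdeg N k =
  (((prime_pi (N %/ nth_prime k))%:R - (prime_pi (N %/ nth_prime k.+1))%:R)
     / (prime_pi N)%:R)%R.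
Proof.
rewrite /Pdeg.
set a := N %/ nth_prime k; set b := N %/ nth_prime k.+1.
have hab : b <= a by rewrite leq_div2l ?nth_prime_gt0 // ltnW // nth_prime_lt.
have haN : a < N.+1 by rewrite ltnS leq_div.
have hbN : b < N.+1 by rewrite ltnS leq_div.
have Hc : #|[set p : 'I_N.+1 | prime p && (degG N p == k)]| =
          count (fun p => prime p && (b < p <= a)) (iota 0 N.+1).
  rewrite (card_ord_count N.+1 (fun p => prime p && (degG N p == k))).
  apply: eq_in_count => p; rewrite mem_iota => /andP[_ hp] /=.
  case Hp: (prime p) => //=.
  have hpN : p <= N by rewrite -ltnS.
  rewrite degG_pi // pi_char ?divn_gt0 ?prime_gt0 //.
  rewrite leq_divRL ?prime_gt0 // ltnNge leq_divRL ?prime_gt0 //.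
  rewrite /a /b leq_divRL ?nth_prime_gt0 // ltnNge leq_divRL ?nth_prime_gt0 //.
  by rewrite mulnC [nth_prime k.+1 * p]mulnC andbC.
have Hs : prime_pi a = prime_pi b + count (fun p => prime p && (b < p <= a)) (iota 0 N.+1).
  rewrite -(pi_count _ _ haN) -(pi_count _ _ hbN); apply: count_split => x /=.
  case: (prime x) => //=; case: (leqP x b) => h /=.
    by rewrite (leq_trans h hab).
  by rewrite add0n.
rewrite Hc Hs GRing.natrD.
by rewrite GRing.addrAC GRing.subrr GRing.add0r.

Qed.
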